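(* Let $\kappa_0,\kappa_{-1},\kappa_2,\kappa_3>0$ and $j\in\mathbb N$. Consider the continuous-time Markov chain on $\mathbb N_0$ of the mass-action reaction network $\varnothing\rightleftharpoons S$ (rates $\kappa_0$, $\kappa_{-1}$), $3S\to2S$ (rate $\kappa_3$), $2S\to(2+j)S$ (rate $\kappa_2$), i.e. with transitions $x\to x+1$ at rate $\kappa_0$, $x\to x-1$ at rate $\kappa_{-1}x+\kappa_3x(x-1)(x-2)$, and $x\to x+j$ at rate $\kappa_2x(x-1)$ (when $j=1$ the last two upward rates add). Then every stationary distribution $\pi$ of this chain satisfies $\pi\in\mathcal P^{1+}_{1/j}\cap\mathcal P^{1-}_{1}$.
   Context: A stationary distribution is a probability measure $\pi$ on $\mathbb N_0$ satisfying the master equation $0=\sum_{\omega}\lambda_\omega(x-\omega)\pi(x-\omega)-\sum_\omega\lambda_\omega(x)\pi(x)$ for all $x$, where $\lambda_\omega(x)$ is the rate of $x\to x+\omega$ (zero at negative arguments). $T_\pi(x)=\sum_{y\ge x}\pi(y)$. For non-negative $f,g$, $f\lesssim g$ (equivalently $g\gtrsim f$) means there are $C,N>0$ with $f(x)\le Cg(x)$ for all $x\ge N$; $\exp(-h(x)(1+o(1)))$ means $\exp(-h(x)(1+\epsilon(x)))$ for some $\epsilon(x)\to0$. $\mathcal P^{1+}_a$ ($a>0$) is the set of probability distributions $\pi$ with $T_\pi(x)\lesssim\exp(-ax\log x(1+o(1)))$, and $\mathcal P^{1-}_a$ those with $T_\pi(x)\gtrsim\exp(-ax\log x(1+o(1)))$.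 *)

(* Defs.v *)
From Stdlib Require Import Reals ZArith List.
From Coquelicot Require Import Coquelicot.
Open Scope R_scope.

(* A transition of a chain on N_0: jump vector omega (an integer) and
   rate function lambda_omega : nat -> R (rates at negative states are 0,
   handled by the guard in [inflow]). Several entries with the same omega
   have their rates added. *)
Definition transition := (Z * (nat -> R))%type.

Definition inflow (pi : nat -> R) (x : nat) (t : transition) : R :=
  let (om, lam) := t in
  let y := (Z.of_nat x - om)%Z in
  if Z_lt_dec y 0 then 0 else lam (Z.to_nat y) * pi (Z.to_nat y).

Definition outflow (pi : nat -> R) (x : nat) (t : transition) : R :=
  let (om, lam) := t in lam x * pi x.

Definition sumR (l : list R) : R := fold_right Rplus 0 l.

Definition master_eq (ts : list transition) (pi : nat -> R) : Prop :=
  forall x : nat,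
    0 = sumR (map (inflow pi x) ts) - sumR (map (outflow pi x) ts).

Definition prob_dist (pi : nat -> R) : Prop :=
  (forall x, 0 <= pi x) /\ is_series pi 1.

Definition stationary (ts : list transition) (pi : nat -> R) : Prop :=
  prob_dist pi /\ master_eq ts pi.

Definition tail (pi : nat -> R) (x : nat) : R := Series (fun k => pi (x + k)%nat).

Definition lesssim (f g : nat -> R) : Prop :=
  exists (C : R) (N : nat), 0 < C /\ (0 < N)%nat /\
    forall x : nat, (N <= x)%nat -> f x <= C * g x.

Definition xlogx_profile (a : R) (eps : nat -> R) (x : nat) : R :=
  exp (- (a * INR x * ln (INR x)) * (1 + eps x)).

Definition P1plus (a : R) (pi : nat -> R) : Prop :=
  prob_dist pi /\
  exists eps : nat -> R, is_lim_seq eps 0 /\ lesssim (tail pi) (xlogx_profile a eps).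

Definition P1minus (a : R) (pi : nat -> R) : Prop :=
  prob_dist pi /\
  exists eps : nat -> R, is_lim_seq eps 0 /\ lesssim (xlogx_profile a eps) (tail pi).

Definition network (k0 km1 k2 k3 : R) (j : nat) : list transition :=
  (1%Z, fun _ => k0) ::
  ((-1)%Z, fun x => km1 * INR x + k3 * INR x * (INR x - 1) * (INR x - 2)) ::
  (Z.of_nat j, fun x => k2 * INR x * (INR x - 1)) :: nil.

(* Main.v *)
Require Import Defs.
From Stdlib Require Import Reals ZArith List Lra Lia Psatz.
From Coquelicot Require Import Coquelicot.
Open Scope R_scope.

Fixpoint Ssum (f : nat -> R) (n : nat) : R :=
  match n with O => 0 | S m => Ssum f m + f m end.

Lemma inflow_p1S pi x g : inflow pi (S x) (1%Z, g) = g x * pi x.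
Proof.
  unfold inflow. destruct Z_lt_dec; [lia|].
  replace (Z.to_nat (Z.of_nat (S x) - 1)) with x by lia. reflexivity.
Qed.
Lemma inflow_p1O pi g : inflow pi 0 (1%Z, g) = 0.
Proof. unfold inflow. destruct Z_lt_dec; [reflexivity|lia]. Qed.
Lemma inflow_m1 pi x g : inflow pi x ((-1)%Z, g) = g (S x) * pi (S x).
Proof.
  unfold inflow. destruct Z_lt_dec; [lia|].
  replace (Z.to_nat (Z.of_nat x - -1)) with (S x) by lia. reflexivity.
Qed.
Lemma inflow_j_le pi x j g : (j <= x)%nat -> inflow pi x (Z.of_nat j, g) = g (x - j)%nat * pi (x - j)%nat.
Proof.
  intro H. unfold inflow. destruct Z_lt_dec; [lia|].
  replace (Z.to_nat (Z.of_nat x - Z.of_nat j)) with (x - j)%nat by lia. reflexivity.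
Qed.
Lemma inflow_j_gt pi x j g : (x < j)%nat -> inflow pi x (Z.of_nat j, g) = 0.
Proof. intro H. unfold inflow. destruct Z_lt_dec; [reflexivity|lia]. Qed.

Section Cut.
Variables (k0 km1 k2 k3 : R) (j : nat) (pi : nat -> R).
Hypothesis Hj : (1 <= j)%nat.
Hypothesis Hm : master_eq (network k0 km1 k2 k3 j) pi.

Definition dn (x : nat) := km1 * INR x + k3 * INR x * (INR x - 1) * (INR x - 2).
Definition upr (x : nat) := k2 * INR x * (INR x - 1).
Definition fl (y : nat) := upr y * pi y.

Lemma cut x : dn (S x) * pi (S x) = k0 * pi x + (Ssum fl (S x) - Ssum fl (S x - j)).
Proof.
  induction x as [|x IH].
  - pose proof (Hm 0%nat) as M. unfold network in M. unfold sumR in M; cbn [map fold_right] in M.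
    rewrite inflow_p1O, inflow_m1, inflow_j_gt in M by lia.
    unfold outflow in M. replace (1 - j)%nat with 0%nat by lia.
    simpl Ssum. unfold fl, upr, dn in *. simpl INR in *. lra.
  - pose proof (Hm (S x)) as M. unfold network in M. unfold sumR in M; cbn [map fold_right] in M.
    rewrite inflow_p1S, inflow_m1 in M.
    unfold outflow in M.
    change (Ssum fl (S (S x))) with (Ssum fl (S x) + fl (S x)).
    destruct (le_lt_dec j (S x)) as [Hle|Hlt].
    + rewrite inflow_j_le in M by lia.
      replace (S (S x) - j)%nat with (S (S x - j)) by lia.
      change (Ssum fl (S (S x - j))) with (Ssum fl (S x - j) + fl (S x - j)%nat).
      unfold fl, upr, dn in *. lra.
    + rewrite inflow_j_gt in M by lia.
      replace (S (S x) - j)%nat with 0%nat by lia.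
      replace (S x - j)%nat with 0%nat in IH by lia.
      unfold fl, upr, dn in *. simpl Ssum in *. lra.
Qed.
End Cut.

Lemma exp_le' x y : x <= y -> exp x <= exp y.
Proof. intro H. destruct (Req_dec x y) as [->|N]; [lra|]. left; apply exp_increasing; lra. Qed.

Lemma Ssum_mono f n m : (forall y, 0 <= f y) -> (n <= m)%nat -> Ssum f n <= Ssum f m.
Proof. intros Hf H. induction H; [lra|]. simpl. specialize (Hf m). lra. Qed.
Lemma Ssum_nonneg f n : (forall y, 0 <= f y) -> 0 <= Ssum f n.
Proof. intro Hf. apply (Ssum_mono f 0 n Hf). lia. Qed.
Lemma Ssum_term f n y : (forall y, 0 <= f y) -> (y < n)%nat -> f y <= Ssum f n.
Proof. intros Hf H. pose proof (Ssum_mono f (S y) n Hf H). simpl in H0.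
  pose proof (Ssum_nonneg f y Hf). lra. Qed.
Lemma Ssum_zero f n : (forall y, (y < n)%nat -> f y = 0) -> Ssum f n = 0.
Proof. induction n; intro H; simpl; [lra|]. rewrite IHn, H; [lra|lia|]. intros; apply H; lia. Qed.
Lemma Ssum_window f n m M : (forall y, (n <= y < n + m)%nat -> f y <= M) ->
  Ssum f (n + m) - Ssum f n <= INR m * M.
Proof.
  induction m; intro H.
  - rewrite Nat.add_0_r. simpl. lra.
  - replace (n + S m)%nat with (S (n + m)) by lia. simpl Ssum. rewrite S_INR.
    assert (f (n+m)%nat <= M) by (apply H; lia).
    assert (Ssum f (n + m) - Ssum f n <= INR m * M) by (apply IHm; intros; apply H; lia).
    lra.
Qed.

Lemma cube_nonneg n : 0 <= INR n * (INR n - 1) * (INR n - 2).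
Proof.
  destruct (le_lt_dec n 2) as [H|H].
  - destruct n as [|[|[|n]]]; [simpl; lra|simpl; lra| |lia]. simpl. lra.
  - assert (3 <= INR n) by (replace 3 with (INR 3) by (simpl; lra); apply le_INR; lia). nra.
Qed.
Lemma sq_nonneg n : 0 <= INR n * (INR n - 1).
Proof. destruct n as [|n]; [simpl; lra|]. rewrite S_INR. pose proof (pos_INR n). nra. Qed.

Lemma tail_ge pi x : (forall y, 0 <= pi y) -> ex_series pi -> pi x <= Defs.tail pi x.
Proof.
  intros Hp He. unfold Defs.tail.
  assert (E : ex_series (fun k => pi (x + k)%nat)) by (apply ex_series_incr_n; exact He).
  rewrite Series_incr_1 by exact E. rewrite Nat.add_0_r.
  assert (0 <= Series (fun k => pi (x + S k)%nat)).
  { replace 0 with (Series (fun k => 0 * pi (x + S k)%nat)).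
    - apply Series_le. intro n. split; [lra|]. rewrite Rmult_0_l. apply Hp.
      apply (ex_series_incr_1 (fun k => pi (x + k)%nat)). exact E.
    - rewrite Series_scal_l. ring. }
  lra.
Qed.

Lemma lim_inv_ln K : is_lim_seq (fun n => K / ln (INR n)) 0.
Proof.
  replace (Finite 0) with (Rbar_mult K (Rbar_inv p_infty)) by (simpl; rewrite Rmult_0_r; reflexivity).
  apply (is_lim_seq_scal_l (fun n => / ln (INR n))).
  apply is_lim_seq_inv; [|discriminate].
  apply (is_lim_comp_seq ln INR p_infty p_infty).
  - exact is_lim_ln_p.
  - exists 0%nat. intros; discriminate.
  - exact is_lim_seq_INR.
Qed.

Section Main.
Variables (k0 km1 k2 k3 : R) (j : nat) (pi : nat -> R).
Hypotheses (Hk0 : 0 < k0) (Hkm1 : 0 < km1) (Hk2 : 0 < k2) (Hk3 : 0 < k3) (Hj : (1 <= j)%nat).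
Hypothesis Hst : stationary (network k0 km1 k2 k3 j) pi.

Local Notation DN := (dn km1 k3).
Local Notation FL := (fl k2 pi).
Lemma pnn y : 0 <= pi y. Proof. apply Hst. Qed.
Lemma Hser : is_series pi 1. Proof. apply Hst. Qed.
Lemma Hex : ex_series pi. Proof. exists 1. apply Hser. Qed.
Lemma cutM x : DN (S x) * pi (S x) = k0 * pi x + (Ssum FL (S x) - Ssum FL (S x - j)).
Proof. apply cut; [exact Hj| apply Hst]. Qed.
Lemma fl_nn y : 0 <= FL y.
Proof. unfold fl, upr. pose proof (sq_nonneg y). pose proof (pnn y).
  replace (k2 * INR y * (INR y - 1) * pi y) with ((k2 * (INR y * (INR y - 1))) * pi y) by ring.
  apply Rmult_le_pos; [apply Rmult_le_pos|]; lra. Qed.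
Lemma dn_pos x : 0 < DN (S x).
Proof. unfold dn. pose proof (cube_nonneg (S x)). pose proof (lt_0_INR (S x) ltac:(lia)).
  replace (k3 * INR (S x) * (INR (S x) - 1) * (INR (S x) - 2)) with
    (k3 * (INR (S x) * (INR (S x) - 1) * (INR (S x) - 2))) by ring.
  pose proof (Rmult_le_pos k3 _ (Rlt_le _ _ Hk3) H). nra. Qed.
Lemma W_nn x : 0 <= Ssum FL (S x) - Ssum FL (S x - j).
Proof. pose proof (Ssum_mono FL (S x - j) (S x) fl_nn ltac:(lia)). lra. Qed.

Lemma pi0_pos : 0 < pi 0.
Proof.
  destruct (pnn 0) as [H|H]; [exact H|exfalso].
  assert (Z : forall n x, (x <= n)%nat -> pi x = 0).
  { induction n; intros x Hx.
    - replace x with 0%nat by lia. auto.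
    - destruct (le_lt_dec x n); [apply IHn; lia|]. replace x with (S n) by lia.
      pose proof (cutM n) as C.
      rewrite (Ssum_zero FL (S n)), (Ssum_zero FL (S n - j)) in C
        by (intros y Hy; unfold fl; rewrite (IHn y) by lia; ring).
      rewrite (IHn n) in C by lia. pose proof (dn_pos n).
      assert (DN (S n) * pi (S n) = 0) by lra.
      apply Rmult_integral in H1. destruct H1; lra. }
  pose proof (is_series_unique _ _ Hser).
  rewrite (Series_ext _ (fun n => 0 * pi n)) in H0 by (intro n; rewrite (Z n n); lia || ring).
  rewrite Series_scal_l in H0. lra.
Qed.

Lemma pi_pos x : 0 < pi x.
Proof.
  induction x; [apply pi0_pos|].
  pose proof (cutM x). pose proof (W_nn x). pose proof (dn_pos x).
  assert (0 < DN (S x) * pi (S x)) by nra.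
  destruct (Rlt_le_dec 0 (pi (S x))); [auto|]. nra.
Qed.

Definition cc := k2 / (km1 / 2 + k3).

Lemma ratio_low x : (2 <= x)%nat -> cc / (INR x + 1) * pi x <= pi (S x).
Proof.
  intro Hx. pose proof (cutM x) as C.
  assert (Hw : FL x <= Ssum FL (S x) - Ssum FL (S x - j)).
  { change (Ssum FL (S x)) with (Ssum FL x + FL x). pose proof (Ssum_mono FL (S x - j) x fl_nn ltac:(lia)). lra. }
  pose proof (pnn x). pose proof (dn_pos x).
  assert (HX : 2 <= INR x) by (replace 2 with (INR 2) by (simpl; lra); apply le_INR; lia).
  set (X := INR x) in *.
  assert (HY : 2 <= X * (X - 1)) by nra.
  assert (Hd : DN (S x) = (X + 1) * (km1 + k3 * (X * (X - 1)))).
  { unfold dn. rewrite S_INR. fold X. ring. }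
  assert (Hfl : FL x = k2 * (X * (X - 1)) * pi x) by (unfold fl, upr; fold X; ring).
  assert (Hc : cc * (km1 + k3 * (X * (X - 1))) <= k2 * (X * (X - 1))).
  { assert (E : cc * (km1 / 2 + k3) = k2) by (unfold cc; field; lra).
    assert (P : 0 <= cc) by (unfold cc; apply Rlt_le, Rdiv_lt_0_compat; lra).
    assert (km1 + k3 * (X * (X - 1)) <= (km1 / 2 + k3) * (X * (X - 1))) by nra.
    rewrite <- E. nra. }
  apply (Rmult_le_reg_l (DN (S x))); [lra|].
  rewrite Hd. replace ((X + 1) * (km1 + k3 * (X * (X - 1))) * (cc / (X + 1) * pi x))
    with (cc * (km1 + k3 * (X * (X - 1))) * pi x) by (field; lra).
  rewrite <- Hd. nra.
Qed.

Lemma cc_pos : 0 < cc.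
Proof. unfold cc; apply Rdiv_lt_0_compat; lra. Qed.
Definition KL := Rabs (ln cc).
Definition Lf (x : nat) := exp (- (INR x * ln (INR x)) - KL * INR x).
Lemma Lf_pos x : 0 < Lf x. Proof. apply exp_pos. Qed.

Lemma ln_pos_ge1 X : 1 <= X -> 0 <= ln X.
Proof. intro H. rewrite <- ln_1. apply ln_le; lra. Qed.

Lemma Lstep x : (1 <= x)%nat -> Lf (S x) <= cc / (INR x + 1) * Lf x.
Proof.
  intro Hx. assert (HX : 1 <= INR x) by (replace 1 with (INR 1) by reflexivity; apply le_INR; lia).
  unfold Lf. rewrite S_INR. set (X := INR x) in *.
  replace (cc / (X + 1)) with (exp (ln cc - ln (X + 1))).
  2:{ unfold Rminus. rewrite exp_plus, exp_ln by apply cc_pos. rewrite <- ln_Rinv by lra.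
      rewrite exp_ln by (apply Rinv_0_lt_compat; lra). reflexivity. }
  rewrite <- exp_plus. apply exp_le'.
  assert (ln X <= ln (X + 1)) by (apply ln_le; lra).
  assert (X * ln X <= X * ln (X + 1)) by (apply Rmult_le_compat_l; lra).
  assert (0 <= ln cc + KL) by (unfold KL, Rabs; destruct Rcase_abs; lra).
  nra.
Qed.

Lemma Llow n : pi 2 / Lf 2 * Lf (2 + n) <= pi (2 + n).
Proof.
  pose proof (Lf_pos 2).
  induction n.
  - rewrite Nat.add_0_r. right. field. lra.
  - replace (2 + S n)%nat with (S (2 + n)) by lia.
    pose proof (ratio_low (2 + n) ltac:(lia)).
    pose proof (Lstep (2 + n) ltac:(lia)).
    pose proof (pi_pos 2). pose proof (Lf_pos (2 + n)).
    assert (0 < cc / (INR (2 + n) + 1)).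
    { apply Rdiv_lt_0_compat; [apply cc_pos|]. pose proof (pos_INR (2 + n)). lra. }
    assert (0 < pi 2 / Lf 2) by (apply Rdiv_lt_0_compat; lra).
    apply Rle_trans with (pi 2 / Lf 2 * (cc / (INR (2 + n) + 1) * Lf (2 + n))).
    + apply Rmult_le_compat_l; lra.
    + apply Rle_trans with (cc / (INR (2 + n) + 1) * pi (2 + n)); [|exact H0].
      rewrite <- Rmult_assoc, (Rmult_comm (pi 2 / Lf 2)), Rmult_assoc.
      apply Rmult_le_compat_l; lra.
Qed.

Lemma lower : P1minus 1 pi.
Proof.
  split; [apply Hst|].
  exists (fun n => KL / ln (INR n)). split; [apply lim_inv_ln|].
  exists (Lf 2 / pi 2), 2%nat. pose proof (pi_pos 2). pose proof (Lf_pos 2).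
  split; [apply Rdiv_lt_0_compat; lra|]. split; [lia|].
  intros x Hx.
  assert (HX : 2 <= INR x) by (replace 2 with (INR 2) by (simpl; lra); apply le_INR; lia).
  assert (Hl : 0 < ln (INR x)) by (rewrite <- ln_1; apply ln_increasing; lra).
  assert (E : xlogx_profile 1 (fun n => KL / ln (INR n)) x = Lf x).
  { unfold xlogx_profile, Lf. apply f_equal. field. lra. }
  rewrite E.
  pose proof (Llow (x - 2)). replace (2 + (x - 2))%nat with x in H1 by lia.
  pose proof (tail_ge pi x pnn Hex).
  apply Rle_trans with (Lf 2 / pi 2 * pi x).
  - apply (Rmult_le_reg_l (pi 2 / Lf 2)); [apply Rdiv_lt_0_compat; lra|].
    replace (pi 2 / Lf 2 * (Lf 2 / pi 2 * pi x)) with (pi x) by (field; lra). exact H1.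
  - apply Rmult_le_compat_l; [apply Rlt_le, Rdiv_lt_0_compat; lra|exact H2].
Qed.
End Main.

Lemma exists_nat_ge r : exists n, r <= INR n.
Proof.
intros. destruct (archimed r) as [H1 _]. exists (Z.to_nat (up r)).
destruct (Z_lt_le_dec (up r) 0).
- pose proof (pos_INR (Z.to_nat (up r))). apply IZR_lt in l. lra.
- rewrite INR_IZR_INZ, Z2Nat.id by auto. lra.
Qed.

Lemma ln_diff_le X Y : 0 < Y -> Y <= X -> Y * (ln X - ln Y) <= X - Y.
Proof.
  intros HY HXY. pose proof (exp_ineq1_le (ln (X / Y))).
  rewrite exp_ln in H by (apply Rdiv_lt_0_compat; lra).
  rewrite ln_div in H by lra.
  apply (Rmult_le_compat_l Y) in H; [|lra].
  replace (Y * (X / Y)) with X in H by (field; lra). lra.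
Qed.

Section Upper.
Variables (k0 km1 k2 k3 : R) (j : nat) (pi : nat -> R).
Hypotheses (Hk0 : 0 < k0) (Hkm1 : 0 < km1) (Hk2 : 0 < k2) (Hk3 : 0 < k3) (Hj : (1 <= j)%nat).
Hypothesis Hst : stationary (network k0 km1 k2 k3 j) pi.
Local Notation DN := (dn km1 k3).
Local Notation FL := (fl k2 pi).
Local Notation J := (INR j).

Lemma J1 : 1 <= J. Proof. replace 1 with (INR 1) by reflexivity. apply le_INR; lia. Qed.

Definition AA := 4 * (k0 + k2 * J) / k3.
Lemma AA_pos : 0 < AA.
Proof. unfold AA. pose proof J1. apply Rdiv_lt_0_compat; nra. Qed.
Definition KU := 1 + Rabs (ln AA).
Definition phi (X : R) := - (1 / J) * (X * ln X) + KU * X.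
Definition U (x : nat) := exp (phi (INR x)).

Lemma phi_step X Y : 1 <= Y -> 1 <= X - Y <= J -> ln AA - ln X + phi Y <= phi X.
Proof.
  intros HY Hd. pose proof J1.
  pose proof (ln_diff_le X Y ltac:(lra) ltac:(lra)).
  assert (HLx : 0 <= ln X) by (rewrite <- ln_1; apply ln_le; lra).
  set (q := 1 / J). assert (Hq : 0 < q) by (unfold q; apply Rdiv_lt_0_compat; lra).
  assert (HqJ : q * J = 1) by (unfold q; field; lra).
  set (d := X - Y) in *. replace X with (Y + d) in * by (unfold d; ring).
  set (Lx := ln (Y + d)) in *. set (Ly := ln Y) in *.
  assert (h1 : q * (Y * (Lx - Ly)) <= q * d) by (apply Rmult_le_compat_l; lra).
  assert (hqd : q * d <= 1) by nra.
  assert (h2 : q * d * (1 + Lx) <= 1 + Lx) by nra.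
  assert (HK : 1 + ln AA <= KU) by (unfold KU, Rabs; destruct Rcase_abs; lra).
  assert (h3 : KU <= KU * d) by (assert (0 <= KU) by (unfold KU; pose proof (Rabs_pos (ln AA)); lra); nra).
  unfold phi. fold q. change (ln (Y + d)) with Lx. change (ln Y) with Ly. lra.
Qed.

Lemma phi_mono Y : 1 <= Y -> J * (KU + ln 2) <= ln (Y + 1) -> phi (Y + 1) <= phi Y - ln 2.
Proof.
  intros HY HL. pose proof J1.
  assert (HL0 : 0 <= ln Y) by (rewrite <- ln_1; apply ln_le; lra).
  assert (HL1 : ln Y <= ln (Y + 1)) by (apply ln_le; lra).
  set (q := 1 / J). assert (Hq : 0 < q) by (unfold q; apply Rdiv_lt_0_compat; lra).
  assert (HqJ : q * J = 1) by (unfold q; field; lra).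
  assert (h1 : 0 <= q * (Y * (ln (Y + 1) - ln Y))) by (apply Rmult_le_pos; nra).
  assert (h2 : q * (J * (KU + ln 2)) <= q * ln (Y + 1)) by (apply Rmult_le_compat_l; lra).
  unfold phi. fold q. nra.
Qed.


Lemma U_pos x : 0 < U x. Proof. apply exp_pos. Qed.

Section WithN.
Variable N : nat.
Hypothesis HN : (j + 4 <= N)%nat.
Hypothesis HNr : J * (KU + ln 2) <= ln (INR N).

Lemma U_half y : (N <= y)%nat -> U (S y) <= U y * (1 / 2).
Proof.
  intro Hy. unfold U. rewrite S_INR.
  assert (HY : 1 <= INR y) by (replace 1 with (INR 1) by reflexivity; apply le_INR; lia).
  assert (ln (INR N) <= ln (INR y + 1)).
  { apply ln_le. apply lt_0_INR; lia. rewrite <- S_INR. apply le_INR; lia. }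
  pose proof (phi_mono (INR y) HY ltac:(lra)).
  replace (exp (phi (INR y)) * (1 / 2)) with (exp (phi (INR y) - ln 2)).
  - apply exp_le'; exact H0.
  - unfold Rminus. rewrite exp_plus, exp_Ropp, exp_ln by lra. field.
Qed.

Lemma U_geo x k : (N <= x)%nat -> U (x + k) <= U x * (1 / 2) ^ k.
Proof.
  intro Hx. induction k.
  - rewrite Nat.add_0_r. simpl. lra.
  - replace (x + S k)%nat with (S (x + k)) by lia.
    pose proof (U_half (x + k) ltac:(lia)). simpl pow.
    pose proof (U_pos (x + k)). nra.
Qed.

Lemma U_win x y : (N <= x)%nat -> (x - j <= y < x)%nat -> U y * (AA / INR x) <= U x.
Proof.
  intros Hx Hy.
  assert (HY : 1 <= INR y) by (replace 1 with (INR 1) by reflexivity; apply le_INR; lia).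
  assert (HXY : INR x - INR y = INR (x - y)) by (rewrite minus_INR by lia; reflexivity).
  assert (1 <= INR (x - y) <= J) by (split; [replace 1 with (INR 1) by reflexivity|]; apply le_INR; lia).
  pose proof (phi_step (INR x) (INR y) HY ltac:(lra)).
  assert (HX : 0 < INR x) by (apply lt_0_INR; lia).
  replace (U y * (AA / INR x)) with (exp (ln AA - ln (INR x) + phi (INR y))).
  - apply exp_le'. exact H0.
  - unfold U, Rminus. rewrite !exp_plus, exp_Ropp, !exp_ln by (try apply AA_pos; lra). field. lra.
Qed.

Definition Bc := Ssum (fun y => pi y / U y) N.
Lemma Bc_nn : 0 <= Bc.
Proof. apply Ssum_nonneg. intro y. apply Rdiv_le_0_compat; [apply (pnn k0 km1 k2 k3 j pi Hst)|apply U_pos]. Qed.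

Lemma pi_le_BU : forall x, pi x <= Bc * U x.
Proof.
  assert (Hnn : forall y, 0 <= pi y) by (apply (pnn k0 km1 k2 k3 j pi Hst)).
  assert (G : forall n x, (x < n)%nat -> pi x <= Bc * U x).
  2:{ intro x. apply (G (S x)). lia. }
  induction n; intros x Hxn; [lia|].
  destruct (le_lt_dec N x) as [HxN|HxN].
  2:{ assert (pi x / U x <= Bc).
      { apply (Ssum_term (fun y => pi y / U y)); [|exact HxN].
        intro y. apply Rdiv_le_0_compat; [apply Hnn|apply U_pos]. }
      pose proof (U_pos x). apply (Rmult_le_compat_r (U x)) in H; [|lra].
      replace (pi x / U x * U x) with (pi x) in H by (field; lra). lra. }
  destruct x as [|m]; [lia|].
  pose proof (cut k0 km1 k2 k3 j pi Hj (proj2 Hst) m) as C.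
  set (x := S m) in *.
  assert (HX : 4 <= INR x) by (replace 4 with (INR 4) by (simpl; lra); apply le_INR; lia).
  set (X := INR x) in *.
  pose proof AA_pos. pose proof Bc_nn. pose proof (U_pos x). pose proof J1.
  set (V := Bc * U x * X / AA).
  assert (HV : forall y, (x - j <= y < x)%nat -> pi y <= V).
  { intros y Hy. pose proof (U_win x y HxN Hy).
    assert (U y <= U x * X / AA).
    { apply (Rmult_le_reg_r (AA / X)). apply Rdiv_lt_0_compat; lra.
      replace (U x * X / AA * (AA / X)) with (U x) by (field; lra). exact H3. }
    apply Rle_trans with (Bc * U y); [apply IHn; lia|].
    unfold V. replace (Bc * U x * X / AA) with (Bc * (U x * X / AA)) by (field; lra).
    apply Rmult_le_compat_l; lra. }
  assert (HV0 : 0 <= V) by (unfold V; apply Rdiv_le_0_compat; [apply Rmult_le_pos; [apply Rmult_le_pos|]|]; lra).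
  assert (Hwin : Ssum FL x - Ssum FL (x - j) <= J * (k2 * (X * X) * V)).
  { replace x with ((x - j) + j)%nat at 1 by lia.
    apply Ssum_window. intros y Hy.
    assert (HY1 : 1 <= INR y) by (replace 1 with (INR 1) by reflexivity; apply le_INR; lia).
    assert (HYX : INR y <= X) by (apply le_INR; lia).
    pose proof (HV y ltac:(lia)). pose proof (Hnn y).
    unfold fl, upr.
    assert (INR y * (INR y - 1) <= X * X) by nra.
    assert (0 <= INR y * (INR y - 1)) by nra.
    replace (k2 * INR y * (INR y - 1) * pi y) with (k2 * (INR y * (INR y - 1) * pi y)) by ring.
    apply Rle_trans with (k2 * (X * X * V)); [|right; ring].
    apply Rmult_le_compat_l; [lra|]. apply Rmult_le_compat; lra. }
  assert (Hm : k0 * pi m <= k0 * (X * X) * V).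
  { pose proof (HV m ltac:(unfold x; lia)). assert (1 <= X * X) by nra.
    assert (V <= X * X * V) by nra.
    replace (k0 * (X * X) * V) with (k0 * (X * X * V)) by ring.
    apply Rmult_le_compat_l; lra. }
  assert (HD : k3 * (X * X * X) / 4 <= DN x).
  { unfold dn. fold X. pose proof (Rmult_le_pos km1 X ltac:(lra) ltac:(lra)).
    assert (X * X * X / 4 <= X * (X - 1) * (X - 2)) by nra. nra. }
  assert (E : (k0 + J * k2) * (X * X) * V = k3 * (X * X * X) / 4 * (Bc * U x)).
  { unfold V, AA. field. repeat split; nra. }
  assert (k3 * (X * X * X) / 4 * pi x <= k3 * (X * X * X) / 4 * (Bc * U x)).
  { pose proof (Hnn x). apply Rle_trans with (DN x * pi x); [nra|]. rewrite C. nra. }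
  assert (0 < X * X * X) by (repeat apply Rmult_lt_0_compat; lra).
  apply Rmult_le_reg_l in H3; [exact H3|]. apply Rdiv_lt_0_compat; [apply Rmult_lt_0_compat|]; lra.
Qed.

Lemma tail_le x : (N <= x)%nat -> Defs.tail pi x <= 2 * Bc * U x.
Proof.
  intro Hx. unfold Defs.tail.
  replace (2 * Bc * U x) with (Series (fun k => Bc * U x * (1 / 2) ^ k)).
  - apply Series_le.
    + intro k. split; [apply (pnn k0 km1 k2 k3 j pi Hst)|].
      apply Rle_trans with (Bc * U (x + k)); [apply pi_le_BU|].
      rewrite Rmult_assoc. apply Rmult_le_compat_l; [apply Bc_nn|]. apply U_geo; exact Hx.
    + apply (ex_series_scal_l (V := R_NormedModule) (Bc * U x) (fun n => (1/2)^n)).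
      exists (/ (1 - 1/2)). apply is_series_geom. rewrite Rabs_pos_eq; lra.
  - rewrite Series_scal_l. rewrite (is_series_unique _ (/ (1 - 1/2))).
    + field.
    + apply is_series_geom. rewrite Rabs_pos_eq; lra.
Qed.

End WithN.

Lemma upper : P1plus (1 / J) pi.
Proof.
  destruct (exists_nat_ge (exp (J * (KU + ln 2)))) as [N0 HN0].
  set (N := (N0 + j + 4)%nat).
  assert (HN : (j + 4 <= N)%nat) by (unfold N; lia).
  assert (HNr : J * (KU + ln 2) <= ln (INR N)).
  { rewrite <- (ln_exp (J * (KU + ln 2))). apply ln_le; [apply exp_pos|].
    apply Rle_trans with (INR N0); [exact HN0|apply le_INR; unfold N; lia]. }
  split; [apply Hst|].
  exists (fun n => (- (KU * J)) / ln (INR n)). split; [apply lim_inv_ln|].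
  assert (Hp0 : 0 < pi 0) by (apply (pi0_pos k0 km1 k2 k3 j pi); assumption).
  assert (HB : 0 < Bc N).
  { apply Rlt_le_trans with (pi 0 / U 0).
    - apply Rdiv_lt_0_compat; [exact Hp0|apply U_pos].
    - apply (Ssum_term (fun y => pi y / U y)); [|lia].
      intro y. apply Rdiv_le_0_compat; [apply (pnn k0 km1 k2 k3 j pi Hst)|apply U_pos]. }
  exists (2 * Bc N), N. split; [lra|]. split; [lia|].
  intros x Hx.
  assert (HX : 4 <= INR x) by (replace 4 with (INR 4) by (simpl; lra); apply le_INR; lia).
  assert (Hl : 0 < ln (INR x)) by (rewrite <- ln_1; apply ln_increasing; lra).
  pose proof J1.
  assert (E : xlogx_profile (1 / J) (fun n => (- (KU * J)) / ln (INR n)) x = U x).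
  { unfold xlogx_profile, U, phi. apply f_equal. field. split; lra. }
  rewrite E. pose proof (tail_le N HN HNr x Hx). lra.
Qed.
End Upper.

Theorem mainTheorem11 (k0 km1 k2 k3 : R) (j : nat) :
  0 < k0 -> 0 < km1 -> 0 < k2 -> 0 < k3 -> (1 <= j)%nat ->
  forall pi : nat -> R,
    stationary (network k0 km1 k2 k3 j) pi ->
    P1plus (1 / INR j) pi /\ P1minus 1 pi.
Proof.
  intros Hk0 Hkm1 Hk2 Hk3 Hj pi Hst. split.
  - apply (upper k0 km1 k2 k3 j pi); assumption.
  - apply (lower k0 km1 k2 k3 j pi); assumption.
Qed.
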